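(* Let $V$ be a smooth manifold carrying two structures of a finite-dimensional real vector space (compatible with its smooth structure), with scalar multiplications $h^1_t$ and $h^2_t$, $t\ge 0$. If the homotheties commute, $h^1_t\circ h^2_s=h^2_s\circ h^1_t$ for all $s,t\ge 0$, then the two vector space structures coincide. *)

(* Defs.v *)
From HB Require Import structures.
From mathcomp Require Import all_boot all_order all_algebra.
From mathcomp Require Import all_classical all_reals all_analysis.
Set Implicit Arguments. Unset Strict Implicit. Unset Printing Implicit Defensive.
Import Order.TTheory GRing.Theory Num.Theory.
Import numFieldNormedType.Exports.
Local Open Scope ring_scope.

Fixpoint Ck (R : realType) (n m : nat) (k : nat)
  (f : 'rV[R]_n -> 'rV[R]_m) : Prop :=
  match k with
  | 0 => continuous f
  | k'.+1 => (forall x v, derivable f x v) /\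
             (forall v, Ck k' (fun x => derive f x v))
  end.

Definition smooth (R : realType) (n m : nat) (f : 'rV[R]_n -> 'rV[R]_m) :=
  forall k, Ck k f.

(* A finite-dimensional real vector space structure on a set V, given by a
   linear coordinate system e : V -> R^n with inverse e'. *)
Record vs_structure (R : realType) (V : Type) := VSStruct {
  vs_dim : nat;
  vs_coord : V -> 'rV[R]_vs_dim;
  vs_inv : 'rV[R]_vs_dim -> V;
  vs_coordK : cancel vs_coord vs_inv;
  vs_invK : cancel vs_inv vs_coord }.
Arguments vs_dim {R V}.
Arguments vs_coord {R V}.
Arguments vs_inv {R V}.

Definition vs_add (R : realType) V (S : vs_structure R V) (x y : V) : V :=
  vs_inv S (vs_coord S x + vs_coord S y).
Definition vs_scale (R : realType) V (S : vs_structure R V) (t : R) (x : V) : V :=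
  vs_inv S (t *: vs_coord S x).

(* Two vector space structures are compatible with one common smooth structure
   on V iff the transition map between their linear charts is a diffeomorphism. *)
Definition smoothly_compatible (R : realType) V (S1 S2 : vs_structure R V) :=
  smooth (fun u => vs_coord S2 (vs_inv S1 u)) /\
  smooth (fun u => vs_coord S1 (vs_inv S2 u)).

(* Main.v *)
Require Import Defs.
From HB Require Import structures.
From mathcomp Require Import all_boot all_order all_algebra.
From mathcomp Require Import all_classical all_reals all_analysis.
From mathcomp Require Import ring lra.
Set Implicit Arguments. Unset Strict Implicit. Unset Printing Implicit Defensive.
Import Order.TTheory GRing.Theory Num.Theory.
Import numFieldNormedType.Exports.
Local Open Scope classical_set_scope.
Local Open Scope ring_scope.

Lemma coord_le (R : realType) (p q : nat) (A : 'M[R]_(p,q)) k i : `|A k i| <= `|A|.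
Proof.
rewrite [X in _ <= X]mx_normrE.
exact: (le_bigmax _ (fun ij : 'I_p * 'I_q => `|A ij.1 ij.2|) (k, i)).
Qed.

Lemma dnbhs_right (R : realType) (T : topologicalType) (g : R -> T) (l : T) :
  g @ 0^' --> l -> g @ 0^'+ --> l.
Proof.
move=> H A /H; rewrite /= /within /=.
idtac.
rewrite !nbhs_simpl /=.
rewrite /dnbhs /at_right /within /=.
apply: filterS => y Hy y0; apply: Hy; by rewrite gt_eqF.
Qed.

Section S.
Variables (R : realType) (n m : nat) (f : 'rV[R]_n -> 'rV[R]_m).
Hypothesis Hd : forall x v, derivable f x v.
Hypothesis Hc : forall v, continuous (fun x => derive f x v).

Lemma L1 (x w : 'rV[R]_n) (k : 'I_1) (i : 'I_m) (r : R) :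
  is_derive r 1 (fun s : R => f (x + s *: w) k i) (derive f (x + r *: w) w k i).
Proof.
set p := x + r *: w.
have E : (fun h : R => h^-1 *: (((fun s : R => f (x + s *: w) k i) \o shift r) (h *: 1)
   - f (x + r *: w) k i)) =
  (fun M : 'M[R]_(1, m) => M k i) \o (fun h : R => h^-1 *: ((f \o shift p) (h *: w) - f p)).
  apply/funext => h /=; rewrite !mxE /p.
  by rewrite [h *: 1]mulr1 scalerDl addrCA addrA [x + _]addrC.
have cv : (fun h : R => h^-1 *: (((fun s : R => f (x + s *: w) k i) \o shift r) (h *: 1)
   - f (x + r *: w) k i)) @ 0^' --> derive f p w k i.
  rewrite E; apply: continuous_cvg; first exact: (@coord_continuous R 1 m k i).
  exact: (@Hd p w).
split; first by apply/cvg_ex; eexists; exact: cv.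
exact: cvg_lim cv.
Qed.

Lemma L2 (x w : 'rV[R]_n) (k : 'I_1) (i : 'I_m) (a b : R) : a <= b ->
  exists2 c, c \in `[a, b] &
   f (x + b *: w) k i - f (x + a *: w) k i = derive f (x + c *: w) w k i * (b - a).
Proof.
move=> ab; apply: (MVT_segment (f := fun s : R => f (x + s *: w) k i)
   (df := fun c => derive f (x + c *: w) w k i)) => //.
  by move=> c _; exact: L1.
apply: derivable_within_continuous => c _.
by case: (L1 x w k i c).
Qed.

Lemma right_cvg (z w : 'rV[R]_n) (k : 'I_1) (i : 'I_m) :
  (fun h : R => (h^-1 *: (f (h *: w + z) - f z)) k i) @ 0^'+ --> derive f z w k i.
Proof.
have := continuous_cvg _ (@coord_continuous R 1 m k i _) (dnbhs_right (@Hd z w)).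
exact.
Qed.


Lemma ADD (z u v : 'rV[R]_n) : derive f z (u + v) = derive f z u + derive f z v.
Proof.
apply/matrixP => k i; rewrite mxE.
have Hv : (fun h : R => (h^-1 *: (f (h *: (u + v) + z) - f z)) k i
   - (h^-1 *: (f (h *: u + z) - f z)) k i) @ 0^'+ --> derive f z v k i.
  apply/cvgrPdist_le => e e0.
  have H1 : (fun x => derive f x v k i) @ nbhs z --> derive f z v k i.
    exact: (continuous_cvg _ (@coord_continuous R 1 m k i _) (@Hc v z)).
  move: H1 => /cvgrPdist_le /(_ e e0) /nbhs_ballP [d d0 Hd'].
  near=> h.
  have h0 : 0 < h by near: h; exact: nbhs_right_gt.
  have S0 : 0 < `|u| + `|v| + 1.
    have := normr_ge0 u; have := normr_ge0 v; lra.
  have h1 : h < d / (`|u| + `|v| + 1).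
    near: h; apply: nbhs_right_lt; exact: divr_gt0.
  have hs : h * (`|u| + `|v|) < d.
    rewrite ltr_pdivlMr // in h1.
    have := normr_ge0 u; have := normr_ge0 v; nra.
  have [c cI Heq] := L2 (h *: u + z) v k i (ltW h0).
  have -> : (h^-1 *: (f (h *: (u + v) + z) - f z)) k i
   - (h^-1 *: (f (h *: u + z) - f z)) k i = derive f (h *: u + z + c *: v) v k i.
    rewrite !mxE -mulrBr.
    have -> : h *: (u + v) + z = h *: u + z + h *: v by rewrite scalerDr addrAC.
    have -> : f (h *: u + z) k i = f (h *: u + z + 0 *: v) k i by rewrite scale0r addr0.
    rewrite opprB addrA subrK Heq subr0.
    rewrite mulrC mulfK //; exact: lt0r_neq0.

  apply: Hd'; rewrite -ball_normE /ball_ /=.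
  have -> : z - (h *: u + z + c *: v) = - (h *: u + c *: v).
    by rewrite addrAC opprD addrC opprD addrA [z + _]addrC addrK.
  rewrite normrN; apply: (le_lt_trans (ler_normD _ _)).
  move: cI; rewrite in_itv /= => /andP [c0 ch].
  rewrite !normrZ (ger0_norm c0) (gtr0_norm h0).
  apply: le_lt_trans hs.
  have := normr_ge0 u; have := normr_ge0 v; nra.
have Hu := @right_cvg z u k i.
have Huv := @right_cvg z (u + v) k i.
rewrite -(cvg_lim _ Huv) //; apply: cvg_lim => //.
rewrite addrC.
have -> : (fun h : R => (h^-1 *: (f (h *: (u + v) + z) - f z)) k i) =
  (fun h : R => ((h^-1 *: (f (h *: (u + v) + z) - f z)) k i
   - (h^-1 *: (f (h *: u + z) - f z)) k i) + (h^-1 *: (f (h *: u + z) - f z)) k i).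
  by apply/funext => h; rewrite subrK.
exact: cvgD Hv Hu.
Unshelve. all: by end_near.
Qed.

Lemma SCLpos (z w : 'rV[R]_n) (c : R) : 0 < c -> derive f z (c *: w) = c *: derive f z w.
Proof.
move=> c0; apply/matrixP => k i; rewrite mxE.
have Hq : (fun h : R => (h^-1 *: (f (h *: (c *: w) + z) - f z)) k i) @ 0^'+
    --> c * derive f z w k i.
  apply/cvgrPdist_le => e e0.
  have H1 : (fun x => derive f x w k i) @ nbhs z --> derive f z w k i.
    exact: (continuous_cvg _ (@coord_continuous R 1 m k i _) (@Hc w z)).
  have ec : 0 < e / c by exact: divr_gt0.
  move: H1 => /cvgrPdist_le /(_ _ ec) /nbhs_ballP [d /= d0 Hd'].
  have S0 : 0 < c * `|w| + 1.
    have := normr_ge0 w; nra.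
  near=> h.
  have h0 : 0 < h by near: h; exact: nbhs_right_gt.
  have h1 : h < d / (c * `|w| + 1).
    near: h; apply: nbhs_right_lt; exact: divr_gt0.
  have hs : h * (c * `|w|) < d.
    rewrite ltr_pdivlMr // in h1.
    have := normr_ge0 w; nra.
  have hc0 : 0 <= h * c by rewrite mulr_ge0 // ltW.
  have [c' cI Heq] := L2 z w k i hc0.
  have -> : (h^-1 *: (f (h *: (c *: w) + z) - f z)) k i = c * derive f (z + c' *: w) w k i.
    rewrite !mxE scalerA [_ *: w + z]addrC.
    have -> : f z k i = f (z + 0 *: w) k i by rewrite scale0r addr0.
    rewrite Heq subr0; field; exact: lt0r_neq0.
  rewrite -mulrBr normrM (gtr0_norm c0) -ler_pdivlMl // mulrC.
  apply: Hd'; rewrite -ball_normE /ball_ /=.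
  rewrite opprD addrA subrr sub0r normrN normrZ.
  move: cI; rewrite in_itv /= => /andP [c1 ch].
  rewrite (ger0_norm c1).
  apply: le_lt_trans hs.
  have := normr_ge0 w; nra.
rewrite -(cvg_lim _ (@right_cvg z (c *: w) k i)) //; exact: cvg_lim _ Hq.
Unshelve. all: by end_near.
Qed.
Lemma NEG (z w : 'rV[R]_n) : derive f z (- w) = - derive f z w.
Proof.
have := ADD z w (- w); rewrite subrr derive0 => /eqP; rewrite eq_sym addrC addr_eq0.
by move/eqP.
Qed.

Lemma SCL (z w : 'rV[R]_n) (c : R) : derive f z (c *: w) = c *: derive f z w.
Proof.
case: (ltgtP c 0) => [c0|c0|->].
- have -> : c *: w = - ((- c) *: w) by rewrite scaleNr opprK.
  by rewrite NEG SCLpos ?oppr_gt0 // scaleNr opprK.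
- exact: SCLpos.
- by rewrite !scale0r derive0.
Qed.

Lemma EXP (z y : 'rV[R]_n) :
  derive f z y = \sum_(j < n) y 0 j *: derive f z (delta_mx 0 j).
Proof.
rewrite {1}(row_sum_delta y).
rewrite (big_morph (fun w => derive f z w) (ADD z) (derive0 f z)).
by apply: eq_bigr => j _; rewrite SCL.
Qed.

Lemma LIP : exists2 M : R, 0 <= M & exists2 d : R, 0 < d &
  forall y : 'rV[R]_n, `|y| < d -> forall k i, `|f y k i - f 0 k i| <= M * `|y|.
Proof.
pose M := \sum_(j < n) (`|derive f 0 (delta_mx 0 j)| + 1).
have Hj : forall j : 'I_n, \forall x \near (0 : 'rV[R]_n),
    `|derive f x (delta_mx 0 j)| <= `|derive f 0 (delta_mx 0 j)| + 1.
  move=> j.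
  have := @Hc (delta_mx 0 j) 0.
  move=> /cvgrPdist_le /(_ 1 ltr01).
  apply: filterS => x Hx.
  have := ler_normB (derive f 0 (delta_mx 0 j)) (derive f 0 (delta_mx 0 j) - derive f x (delta_mx 0 j)).
  rewrite opprB addrCA subrr addr0 => H; apply: (le_trans H).
  by rewrite lerD2l.
have Hn := @filter_forall _ _ _ (nbhs (0:'rV[R]_n)) _ Hj.
have [d /= d0 Hd'] := (nbhs_ballP _ _).1 (Hn _).
exists M.
  by apply: sumr_ge0 => j _; rewrite addr_ge0.
exists d => // y yd k i.
have [c cI Heq] := L2 0 y k i ler01.
move: Heq; rewrite !add0r scale1r scale0r subr0 mulr1 => ->.
rewrite EXP summxE.
apply: (le_trans (ler_norm_sum _ _ _)).
rewrite /M mulr_suml; apply: ler_sum => j _.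
rewrite mxE normrM mulrC; apply: ler_pM => //.
  apply: le_trans (coord_le _ _ _) _.
  apply: Hd'; rewrite -ball_normE /ball_ /= sub0r normrN normrZ.
  move: cI; rewrite in_itv /= => /andP [c0 c1].
  rewrite (ger0_norm c0); apply: le_lt_trans yd.
  have := normr_ge0 y; nra.
exact: coord_le.
Qed.
End S.

Theorem proposition2 (R : realType) (V : Type) (S1 S2 : vs_structure R V) :
  smoothly_compatible S1 S2 ->
  (forall (s t : R) (x : V), 0 <= s -> 0 <= t ->
     vs_scale S1 t (vs_scale S2 s x) = vs_scale S2 s (vs_scale S1 t x)) ->
  (forall x y : V, vs_add S1 x y = vs_add S2 x y) /\
  (forall (t : R) (x : V), vs_scale S1 t x = vs_scale S2 t x).
Proof.
move=> [sm12 sm21] Hcomm.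
pose phi := fun u => vs_coord S2 (vs_inv S1 u).
pose psi := fun w => vs_coord S1 (vs_inv S2 w).
have [Hdp Hcp] := sm12 1%N.
have [Hds Hcs] := sm21 1%N.
have phiK : forall u, psi (phi u) = u by move=> u; rewrite /psi /phi vs_coordK vs_invK.
have psiK : forall w, phi (psi w) = w by move=> w; rewrite /psi /phi vs_coordK vs_invK.
have H : forall (s t : R) u, 0 <= s -> 0 <= t ->
    t *: psi (s *: phi u) = psi (s *: phi (t *: u)).
  move=> s t u hs ht; have := Hcomm s t (vs_inv S1 u) hs ht.
  by rewrite /vs_scale => /(congr1 (vs_coord S1)); rewrite !vs_invK.
have psi0 : psi 0 = 0.
  have := H 0 2 0 (lexx _) (ler0n _ 2); rewrite !scale0r -[2]/(1 + 1) scalerDl scale1r.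
  by move/(congr1 (fun z => z - psi 0)); rewrite addrK subrr.
have phi0 : phi 0 = 0 by rewrite -{1}psi0 psiK.
pose E := derive psi 0.
have Ehom : forall t u, 0 <= t -> E (phi (t *: u)) = t *: E (phi u).
  move=> t u ht.
  have Hq : (fun h : R => h^-1 *: (psi (h *: phi (t *: u) + 0) - psi 0)) @ 0^'+
      --> t *: E (phi u).
    apply: cvg_trans (cvgZr (dnbhs_right (@Hds 0 (phi u)))).
    apply: near_eq_cvg; near=> h.
    have h0 : 0 < h by near: h; exact: nbhs_right_gt.
    rewrite /= !addr0 psi0 !subr0 -(H h t u (ltW h0) ht).
    rewrite -/(psi (h *: phi u)) -/(psi 0) psi0 subr0 !scalerA mulrC. done.
  have A := dnbhs_right (@Hds 0 (phi (t *: u))).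
  rewrite -(cvg_lim _ Hq) //; exact: esym (cvg_lim _ A).
have Einj : forall w, E w = 0 -> w = 0.
  move=> w Ew0.
  have [M M0 [d d0 HL]] := LIP Hdp Hcp.
  have Hq : (fun h : R => h^-1 *: (psi (h *: w + 0) - psi 0)) @ 0^'+ --> (0 : 'rV[R]_(vs_dim S1)).
    rewrite -Ew0; exact: dnbhs_right (@Hds 0 w).
  apply/matrixP => k i; rewrite mxE.
  have Hb : forall e : R, 0 < e -> `|w k i| <= M * e.
    move=> e e0.
    have Hn : \forall h \near 0^'+, 0 < h /\ h < d / e /\
        `|0 - h^-1 *: (psi (h *: w + 0) - psi 0)| <= e.
      near=> h; split; first by near: h; exact: nbhs_right_gt.
      split; first by near: h; apply: nbhs_right_lt; exact: divr_gt0.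
      by near: h; move/cvgrPdist_le : Hq; apply.
    have [h [h0 [hd he]]] := filter_ex Hn.
    move: he; rewrite sub0r normrN addr0 psi0 subr0 normrZ normfV (gtr0_norm h0).
    rewrite ler_pdivrMl // => he.
    have pd : `|psi (h *: w)| < d.
      apply: (le_lt_trans he); rewrite ltr_pdivlMr // in hd.
    have := HL _ pd k i; rewrite -/(phi (psi (h *: w))) -/(phi 0) psiK phi0.
    rewrite !mxE subr0 normrM (gtr0_norm h0).
    move=> H2; have H3 := le_trans H2 (ler_wpM2l M0 he).
    rewrite mulrCA in H3; move: H3; rewrite ler_pM2l //.
  case: (eqVneq (w k i) 0) => // Hne.
  have p : 0 < `|w k i| by rewrite normr_gt0.
  have M1 : 0 < M + 1 by lra.
  have := Hb (`|w k i| / (M + 1)) (divr_gt0 p M1).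
  rewrite mulrA ler_pdivlMr // mulrDr mulr1 [M * _]mulrC => Hc.
  lra.
have phom : forall t u, 0 <= t -> phi (t *: u) = t *: phi u.
  move=> t u ht; apply/eqP; rewrite -subr_eq0; apply/eqP/Einj.
  rewrite /E (ADD Hds Hcs) (NEG Hds Hcs) (SCL Hds Hcs).
  by move: (Ehom t u ht); rewrite /E => ->; rewrite subrr.
have phiD : forall w, phi w = derive phi 0 w.
  move=> w.
  have Hq : (fun h : R => h^-1 *: (phi (h *: w + 0) - phi 0)) @ 0^'+ --> phi w.
    apply: cvg_trans (cvg_cst (phi w)).
    apply: near_eq_cvg; near=> h.
    have h0 : 0 < h by near: h; exact: nbhs_right_gt.
    rewrite /= addr0 phi0 subr0 phom ?ltW // scalerA mulVf ?scale1r //.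
    exact: _.
  have A := dnbhs_right (@Hdp 0 w).
  rewrite -(cvg_lim _ Hq) //; exact: cvg_lim _ A.
have phiA : forall a b, phi (a + b) = phi a + phi b.
  by move=> a b; rewrite !phiD (ADD Hdp Hcp).
have phiZ : forall (t : R) a, phi (t *: a) = t *: phi a.
  by move=> t a; rewrite !phiD (SCL Hdp Hcp).
have c2E : forall x, vs_coord S2 x = phi (vs_coord S1 x).
  by move=> x; rewrite /phi vs_coordK.
split.
  move=> x y; rewrite /vs_add (c2E x) (c2E y) -phiA /phi vs_coordK //.
move=> t x; rewrite /vs_scale (c2E x) -phiZ /phi vs_coordK //.
Unshelve. all: by end_near.
Qed.
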